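(* Let $p$ be a permutation of a finite set of integers, and let the largest letter of $p$ be $m=\max(p)$. Write $p=\alpha m\beta$ and $\alpha=a_1a_2\dotsm a_i$. Define the set $\mathrm{unS}(p)$ recursively by \[ \mathrm{unS}(p) \,=\, \bigcup_{j=0}^i \left\{\, \gamma m\delta \,\colon \gamma\in\mathrm{unS}(a_1a_2\dotsm a_j),\, \delta\in\mathrm{unS}(a_{j+1}\dotsm a_i\beta) \,\right\} \] (with $\mathrm{unS}$ of the empty word being the set containing only the empty word). Then $\mathrm{unS}(p)$ contains all classical patterns (up to standardization) that can become $p$ after one pass of stack-sort.
   Context: A pass of stack-sort $S$: the entries of a permutation are read left to right and pushed onto a stack, where the elements on the stack must always be increasing from top to bottom; before pushing an entry, any smaller-than-needed entries, i.e. every entry on top of the stack smaller than the incoming entry, are popped to the output; at the end the stack is emptied to the output. $\mathrm{unS}(p)$ is the list of candidate patterns, i.e. orderings of the letters of $p$ possible prior to sorting. A classical pattern is a permutation; a permutation contains it if some subsequence standardizes to it. *)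

(* Defs.v *)
From mathcomp Require Import all_boot all_order all_algebra.
Set Implicit Arguments. Unset Strict Implicit. Unset Printing Implicit Defensive.
Import Order.TTheory GRing.Theory Num.Theory.
Local Open Scope ring_scope.

(* Stack: a list whose head is the top; entries increase from top to bottom. *)
Fixpoint spush (x : int) (stk : seq int) : seq int * seq int :=
  match stk with
  | [::] => ([::], [:: x])
  | y :: s => if y < x then let: (o, s') := spush x s in (y :: o, s')
              else ([::], x :: stk)
  end.

Fixpoint stack_sort_aux (w stk : seq int) : seq int :=
  match w with
  | [::] => stk
  | x :: w' => let: (o, s') := spush x stk in o ++ stack_sort_aux w' s'
  end.

Definition stack_sort (w : seq int) : seq int := stack_sort_aux w [::].

Definition maxw (p : seq int) : int := foldr Num.max (head 0 p) p.

(* unS, by recursion on the length (fuel n >= size p). *)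
Fixpoint unS_rec (n : nat) (p : seq int) : seq (seq int) :=
  match n with
  | 0%N => [:: [::]]
  | n'.+1 =>
    if p is [::] then [:: [::]] else
    let m := maxw p in
    let i := index m p in
    let a := take i p in
    let b := drop i.+1 p in
    flatten [seq [seq g ++ m :: d | g <- unS_rec n' (take j a),
                                     d <- unS_rec n' (drop j a ++ b)]
            | j <- iota 0 i.+1]
  end.

Definition unS (p : seq int) : seq (seq int) := unS_rec (size p) p.

Example ex1 : stack_sort [:: 2; 3; 1]%R = [:: 2; 1; 3]%R. Proof. by []. Qed.
Example ex2 : unS [:: 1; 2]%R = [:: [:: 2; 1]; [:: 1; 2]]%R. Proof. by []. Qed.

(* Main.v *)
Require Import Defs.
From mathcomp Require Import all_boot all_order all_algebra.
Import Order.TTheory GRing.Theory Num.Theory.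

Lemma spush_all (P : pred int) x stk :
  all P stk -> P x -> all P (spush x stk).2.
Proof.
elim: stk => [|y s IH] /=; first by move=> _ ->.
move=> /andP[Py Ps] Px; case: ifP => _.
  by case E: (spush x s) => [o s'] /=; move: (IH Ps Px); rewrite E.
by rewrite /= Px Py Ps.
Qed.

Lemma spush_perm x stk :
  perm_eq ((spush x stk).1 ++ (spush x stk).2) (x :: stk).
Proof.
elim: stk => [|y s IH] //=.
case: ifP => _ //.
case E: (spush x s) => [o s'] /=; move: IH; rewrite E /= => IH.
rewrite -(perm_cons y) in IH; apply: (perm_trans IH). by rewrite -[y :: x :: s]/([:: y] ++ [:: x] ++ s) perm_catCA.
Qed.

Lemma aux_perm w stk : perm_eq (stack_sort_aux w stk) (w ++ stk).
Proof.
elim: w stk => [|x w IH] stk //=.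
case E: (spush x stk) => [o s'].
have H := spush_perm x stk; rewrite E /= in H.
apply: (perm_trans (perm_cat (perm_refl o) (IH s'))).
rewrite perm_catCA /=. apply: (perm_trans (perm_cat (perm_refl w) H)).
by rewrite -[x :: stk]/([:: x] ++ stk) perm_catCA.
Qed.

Lemma spush_max (m : int) stk : all (fun y => y < m)%R stk -> spush m stk = (stk, [:: m]).
Proof.
elim: stk => [|y s IH] //= /andP[-> /IH ->] //.
Qed.

Lemma spush_app (m x : int) stk : all (fun y => y < m)%R stk -> (x < m)%R ->
  spush x (stk ++ [:: m]) = ((spush x stk).1, (spush x stk).2 ++ [:: m]).
Proof.
elim: stk => [|y s IH] /=.
  by move=> _ xm; rewrite ltNge (ltW xm).
move=> /andP[ym ys] xm; case: ifP => _ //.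
by rewrite IH //; case: (spush x s).
Qed.

Lemma aux_app (m : int) w stk : all (fun y => y < m)%R stk -> all (fun y => y < m)%R w ->
  stack_sort_aux w (stk ++ [:: m]) = stack_sort_aux w stk ++ [:: m].
Proof.
elim: w stk => [|x w IH] stk //= Hs /andP[xm Hw].
rewrite spush_app //.
have Hs' := @spush_all _ x stk Hs xm.
case E: (spush x stk) => [o s'] /=; rewrite E /= in Hs'.
by rewrite IH // catA.
Qed.

Lemma aux_split (m : int) w1 w2 stk :
  all (fun y => y < m)%R stk -> all (fun y => y < m)%R w1 -> all (fun y => y < m)%R w2 ->
  stack_sort_aux (w1 ++ m :: w2) stk = stack_sort_aux w1 stk ++ stack_sort w2 ++ [:: m].
Proof.
elim: w1 stk => [|x w IH] stk /= Hs.
  move=> _ H2; rewrite spush_max //.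
  by have := @aux_app m w2 [::] isT H2; rewrite /= => ->.
move=> /andP[xm Hw] H2.
have Hs' := @spush_all _ x stk Hs xm.
case E: (spush x stk) => [o s'] /=; rewrite E /= in Hs'.
by rewrite IH // catA.
Qed.

Lemma foldr_max_ge (d : int) s x : x \in s -> (x <= foldr Num.max d s)%R.
Proof.
elim: s => [|y s IH] //=; rewrite inE le_max => /orP[/eqP->|/IH->].
  by rewrite lexx.
by rewrite orbT.
Qed.

Lemma foldr_max_in (d : int) s : foldr Num.max d s \in d :: s.
Proof.
elim: s => [|y s IH] /=; first by rewrite inE.
rewrite maxEle; case: ifP => _.
  by move: IH; rewrite !inE => /orP[->|->]; rewrite ?orbT.
by rewrite !inE eqxx orbT.
Qed.

Lemma maxw_in p : p != [::] -> maxw p \in p.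
Proof.
case: p => [|a p] // _; rewrite /maxw.
by move: (foldr_max_in a (a :: p)); rewrite inE => /orP[/eqP->|->]; rewrite ?inE ?eqxx.
Qed.

Lemma maxw_ge p x : x \in p -> (x <= maxw p)%R.
Proof. exact: foldr_max_ge. Qed.

Lemma unS_recS n p : p != [::] -> unS_rec n.+1 p =
    let m := maxw p in
    let i := index m p in
    let a := take i p in
    let b := drop i.+1 p in
    flatten [seq [seq g ++ m :: d | g <- unS_rec n (take j a),
                                     d <- unS_rec n (drop j a ++ b)]
            | j <- iota 0 i.+1].
Proof. by case: p. Qed.

Lemma main n (p q : seq int) : (size p <= n)%N ->
  uniq p -> perm_eq q p -> stack_sort q = p -> q \in unS_rec n p.
Proof.
elim: n p q => [|n IH] p q.
  rewrite leqn0 => /nilP -> _ /perm_nilP -> _; by rewrite inE.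
case: p => [|a p0]; first by move=> _ _ /perm_nilP ->; rewrite inE.
set p := a :: p0 => Hn Hu Hpq Hs.
rewrite unS_recS //; cbv zeta.
set m := maxw p.
have mp : m \in p by apply: maxw_in.
have mq : m \in q by rewrite (perm_mem Hpq).
have Huq : uniq q by rewrite (perm_uniq Hpq).
have [g [d Eqq]] : exists g d, q = g ++ m :: d.
  by move: mq => /splitPr [g d]; exists g, d.
have Hlt : forall x, x \in g ++ d -> (x < m)%R.
  move=> x xin; rewrite lt_neqAle maxw_ge ?andbT; last first.
    by rewrite -(perm_mem Hpq) Eqq !mem_cat inE; move: xin; rewrite mem_cat => /orP[->|->]; rewrite ?orbT.
  apply/negP => /eqP xm; move: Huq; rewrite Eqq cat_uniq /= => /and3P[_ H1 /andP[H2 _]].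
  move: xin; rewrite mem_cat xm => /orP[mg|]; last by rewrite (negbTE H2).
  by move: H1; rewrite /= mg.
have Hg : all (fun y => y < m)%R g by apply/allP => x xg; apply: Hlt; rewrite mem_cat xg.
have Hd : all (fun y => y < m)%R d by apply/allP => x xd; apply: Hlt; rewrite mem_cat xd orbT.
have Ep : p = stack_sort g ++ stack_sort d ++ [:: m].
  by rewrite -Hs Eqq /stack_sort aux_split.
have Pg := aux_perm g [::]; rewrite cats0 in Pg.
have Pd := aux_perm d [::]; rewrite cats0 in Pd.
have mg : m \notin stack_sort g.
  by rewrite (perm_mem Pg); apply/negP => /(allP Hg); rewrite ltxx.
have md : m \notin stack_sort d.
  by rewrite (perm_mem Pd); apply/negP => /(allP Hd); rewrite ltxx.
have Ei : index m p = (size g + size d)%N.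
  rewrite {1}Ep index_cat (negbTE mg) index_cat (negbTE md) /= eqxx addn0.
  by rewrite (perm_size Pg) (perm_size Pd).
rewrite Ei.
apply/flatten_mapP; exists (size g).
  by rewrite mem_iota /= add0n ltnS leq_addr.
have Ea : take (size g + size d) p = stack_sort g ++ stack_sort d.
  by rewrite Ep catA take_cat size_cat (perm_size Pg) (perm_size Pd) ltnn subnn take0 cats0.
have Eb : drop (size g + size d).+1 p = [::].
  by apply/eqP; rewrite -size_eq0 size_drop Ep !size_cat (perm_size Pg) (perm_size Pd) /= addn1 addnS subnn.
rewrite Ea Eb cats0 take_cat -(perm_size Pg) ltnn subnn take0 cats0 drop_cat ltnn subnn drop0.
rewrite Eqq; apply: (allpairs_f (fun g d => g ++ m :: d)).
- apply: IH => //.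
  + rewrite -ltnS; apply: leq_trans Hn; by rewrite Ep !size_cat /= addn1 addnS ltnS leq_addr.
  + by move: Hu; rewrite Ep cat_uniq => /andP[].
  + by rewrite perm_sym.
- apply: IH => //.
  + rewrite -ltnS; apply: leq_trans Hn; by rewrite Ep !size_cat /= addn1 addnS ltnS leq_addl.
  + by move: Hu; rewrite Ep !cat_uniq => /and3P[_ _ /andP[]].
  + by rewrite perm_sym.
Qed.

Theorem proposition4p1 (p q : seq int) :
  uniq p -> perm_eq q p -> stack_sort q = p -> q \in unS p.
Proof. by move=> *; apply: main. Qed.
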